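(* Let $q$ be a prime power, $r\geq1$, $\delta\geq2$ integers and $R=r+\delta-1$. Let $a_1,\dots,a_\ell\in\mathbb{F}_q^*$ and $h=\prod_{i=1}^{\ell}(T^R-a_i)$. Let $P\in\mathbb{F}_q[T]$ be monic irreducible of degree $m$ with $P\equiv1\pmod h$, let $\alpha\in\mathbb{F}_{q^m}$ be a root of $P$, and let $\bar\phi:\mathbb{F}_q[T]\to\mathbb{F}_{q^m}\{\tau\}$ be the Drinfeld module with $\bar\phi_T=\alpha+\tau$ (the reduction modulo $P$ of the Carlitz module $\phi_T=T+\tau$). Then for every $i\in\{1,\ldots,\ell\}$, $\dim_{\mathbb{F}_q}\bar\phi[T^R-a_i]=R$.
   Context: For a field $K\supseteq\mathbb{F}_q$, $K\{\tau\}$ is the twisted polynomial ring with $(a\tau^i)(b\tau^j)=ab^{q^i}\tau^{i+j}$, and a Drinfeld module $\bar\phi$ is an $\mathbb{F}_q$-algebra homomorphism $\mathbb{F}_q[T]\to K\{\tau\}$ determined by $\bar\phi_T$. For $a\in\mathbb{F}_q[T]$, $\bar\phi_a(x)$ is the $q$-linearized polynomial obtained from $\bar\phi_a$ by replacing $\tau^i$ with $x^{q^i}$, and $\bar\phi[a]=\{\beta\in\overline{\mathbb{F}}_{q}:\bar\phi_a(\beta)=0\}$ is the set of $a$-torsion points, an $\mathbb{F}_q$-vector space. *)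

(* Defs.v *)
From HB Require Import structures.
From mathcomp Require Import all_boot all_order all_algebra.
Set Implicit Arguments. Unset Strict Implicit. Unset Printing Implicit Defensive.
Import GRing.Theory.
Local Open Scope ring_scope.

Section Drinfeld.
Variables (F : finFieldType) (L : fieldType) (iota : {rmorphism F -> L}).

Definition phiT (alpha : L) (x : L) : L := alpha * x + x ^+ #|F|.

(* phibar_a(x) for a = sum_i c_i T^i in F_q[T]: the F_q-algebra homomorphism
   T |-> alpha + tau, i.e. phibar_a = sum_i c_i (phibar_T)^i (powers in the
   twisted polynomial ring = composition of linearized polynomials), with
   tau^i replaced by x^(q^i). *)
Definition phi_eval (alpha : L) (a : {poly F}) (x : L) : L :=
  \sum_(i < size a) iota a`_i * iter i (phiT alpha) x.

Definition torsion (alpha : L) (a : {poly F}) (beta : L) : Prop :=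
  phi_eval alpha a beta = 0.

Definition has_Fq_dim (S : L -> Prop) (n : nat) : Prop :=
  exists b : 'I_n -> L,
    (forall c : 'I_n -> F, \sum_(i < n) iota (c i) * b i = 0 -> forall i, c i = 0)
    /\ (forall beta, S beta <-> exists c : 'I_n -> F, beta = \sum_(i < n) iota (c i) * b i).
End Drinfeld.

(* Main.v *)
Require Import Defs.
From HB Require Import structures.
From mathcomp Require Import all_boot all_order all_algebra all_field all_fingroup all_solvable.
Import GRing.Theory.
Local Open Scope ring_scope.

Section Aux.
Variables (F : finFieldType) (L : closedFieldType) (iota : {rmorphism F -> L}).

Lemma q_facts : exists p k, [/\ prime p, #|F| = (p ^ k.+1)%N & p \in [pchar L]].
Proof.
have /is_abelemP [p pr_p /abelem_pgroup] := finField_is_abelem F.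
rewrite pgroupE cardsT => /p_natP [k Hk].
case: k Hk => [|k] Hk.
  by have := finNzRing_gt1 F; rewrite Hk.
exists p, k; split => //.
exact: (rmorph_pchar iota (card_finPcharP Hk pr_p)).
Qed.

Lemma frobD (x y : L) : (x + y) ^+ #|F| = x ^+ #|F| + y ^+ #|F|.
Proof.
have [p [k [pr_p -> chp]]] := q_facts.
apply: exprDn_pchar.
rewrite (eq_pnat _ (pcharf_eq chp)).
by rewrite pnatX pnat_id.
Qed.

Lemma q0 : (#|F|%:R : L) = 0.
Proof.
have [p [k [pr_p -> chp]]] := q_facts.
by rewrite expnS natrM (pcharf0 chp) mul0r.
Qed.

Lemma frobZ (c : F) (x : L) : (iota c * x) ^+ #|F| = iota c * x ^+ #|F|.
Proof. by rewrite exprMn -rmorphXn expf_card. Qed.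

Variable alpha : L.

Lemma iterD i (x y : L) :
  iter i (phiT F alpha) (x + y) = iter i (phiT F alpha) x + iter i (phiT F alpha) y.
Proof.
elim: i => [|i IH] //=; rewrite IH /phiT frobD mulrDr.
by rewrite -!addrA; congr (_ + _); rewrite addrCA.
Qed.

Lemma iterZ i (c : F) (x : L) :
  iter i (phiT F alpha) (iota c * x) = iota c * iter i (phiT F alpha) x.
Proof.
by elim: i => [|i IH] //=; rewrite IH /phiT frobZ mulrDr mulrCA.
Qed.

Definition pT (p : {poly L}) : {poly L} := alpha *: p + p ^+ #|F|.
Definition Qi i := iter i pT 'X.

Lemma Qi_horner i x : (Qi i).[x] = iter i (phiT F alpha) x.
Proof.
elim: i => [|i IH] /=; first by rewrite /Qi /= hornerX.
by rewrite /Qi /= /pT hornerD hornerZ horner_exp -/(Qi i) IH.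
Qed.

Lemma Qi_deriv i : (Qi i)^`() = (alpha ^+ i)%:P.
Proof.
elim: i => [|i IH]; first by rewrite /Qi /= derivX.
rewrite /Qi /= /pT derivD derivZ deriv_exp -/(Qi i) IH.
rewrite -mulr_natr -polyC_natr q0 mulr0 addr0.
by rewrite -mul_polyC -polyCM exprS.
Qed.

Lemma Qi_size i : size (Qi i) = (#|F| ^ i).+1 /\ Qi i \is monic.
Proof.
have q1 := finNzRing_gt1 F.
elim: i => [|i [IHs IHm]]; first by rewrite /Qi /= size_polyX monicX.
rewrite /Qi /= /pT -/(Qi i).
have mX : Qi i ^+ #|F| \is monic by apply: monic_exp.
have sX : size (Qi i ^+ #|F|) = (#|F| ^ i.+1).+1.
  have := size_exp (Qi i) #|F|; rewrite IHs /= -expnSr.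
  have : Qi i ^+ #|F| != 0 by apply: monic_neq0.
  by rewrite -size_poly_eq0; case: (size _) => // n _ /= ->.
have lt : (size (alpha *: Qi i) < size (Qi i ^+ #|F|))%N.
  apply: (leq_ltn_trans (size_scale_leq _ _)).
  rewrite IHs sX ltnS expnS ltn_Pmull //.
  by rewrite expn_gt0 (ltn_trans _ q1).
rewrite addrC size_polyDl // sX; split=> //.
by rewrite monicE lead_coefDl // -monicE.
Qed.

End Aux.
Section Lin.
Variables (F : finFieldType) (L : closedFieldType) (iota : {rmorphism F -> L}).

Definition lc {k} (c : 'I_k -> F) (b : nat -> L) := \sum_(i < k) iota (c i) * b i.
Definition span k (b : nat -> L) : seq L :=
  [seq lc (fun i => c i) b | c : {ffun 'I_k -> F} <- enum {ffun 'I_k -> F}].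
Definition indep k (b : nat -> L) :=
  forall c : 'I_k -> F, lc c b = 0 -> forall i, c i = 0.

Lemma span_size k b : size (span k b) = (#|F| ^ k)%N.
Proof. by rewrite size_map -cardE card_ffun card_ord. Qed.

Lemma span_uniq k b : indep k b -> uniq (span k b).
Proof.
move=> Hi; rewrite map_inj_uniq ?enum_uniq // => c d Hcd.
apply/ffunP => i; apply/eqP; rewrite -subr_eq0; apply/eqP.
apply: (Hi (fun i => c i - d i)).
rewrite /lc (eq_bigr (fun i => iota (c i) * b i - iota (d i) * b i)).
  by rewrite sumrB -/(lc _ b) Hcd subrr.
by move=> j _; rewrite rmorphB mulrBl.
Qed.

Lemma span_mem k b v : v \in span k b <-> exists c : 'I_k -> F, v = lc c b.
Proof.
split.
  by case/mapP => c _ ->; exists (fun i => c i).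
case=> c ->; apply/mapP; exists (finfun c); first by rewrite mem_enum.
by rewrite /lc; apply: eq_bigr => i _; rewrite ffunE.
Qed.

Lemma dim_lemma (rs : seq L) N :
  uniq rs -> size rs = (#|F| ^ N)%N ->
  (forall k (c : 'I_k -> F) b, (forall i, (i < k)%N -> b i \in rs) -> lc c b \in rs) ->
  has_Fq_dim iota (fun z => z \in rs) N.
Proof.
move=> Urs Srs Crs.
have q1 := finNzRing_gt1 F.
have step : forall k, (k <= N)%N -> exists b, indep k b /\ (forall i, (i < k)%N -> b i \in rs).
  elim=> [|k IH] HkN.
    exists (fun _ => 0); split => //.
    by move=> c _ [].
  have [b [Ib Rb]] := IH (ltnW HkN).
  have : ~~ all (fun z => z \in span k b) rs.
    apply/negP => /allP Hall.
    have := uniq_leq_size Urs Hall.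
    by rewrite Srs span_size leqNgt ltn_exp2l // HkN.
  case/allPn => v vrs vnot.
  exists (fun n => if n == k then v else b n); split.
    move=> c Hc.
    move: Hc; rewrite /lc big_ord_recr /=.
    rewrite (eq_bigr (fun i : 'I_k => iota (c (widen_ord (leqnSn k) i)) * b i)); last first.
      by move=> i _ /=; rewrite ltn_eqF.
    rewrite eqxx => Hc.
    have cm0 : c ord_max = 0.
      apply/eqP; apply: contraNT vnot => cm.
      apply/span_mem.
      exists (fun i => - ((c ord_max)^-1 * c (widen_ord (leqnSn k) i))).
      have -> : v = iota ((c ord_max)^-1) * (iota (c ord_max) * v).
        by rewrite mulrA -rmorphM mulVf // rmorph1 mul1r.
      move/eqP: Hc; rewrite addrC addr_eq0 => /eqP ->.
      rewrite mulrN mulr_sumr -sumrN /lc; apply: eq_bigr => i _.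
      by rewrite rmorphN rmorphM mulNr mulrA.
    move: Hc; rewrite cm0 rmorph0 mul0r addr0 => Hc.
    have Hw := Ib _ Hc.
    move=> i; have [ik|] := ltnP i k.
      by have -> : i = widen_ord (leqnSn k) (Ordinal ik) by apply: val_inj.
    move=> ki; have -> : i = ord_max by apply: val_inj => /=; apply/eqP; rewrite eqn_leq ki -ltnS ltn_ord.
    exact: cm0.
  move=> i; rewrite ltnS leq_eqVlt; case: eqP => [_ _|_ /= ik] //.
  exact: Rb.
have [b [Ib Rb]] := step N (leqnn N).
have sub : {subset span N b <= rs}.
  by move=> v /span_mem [c ->]; apply: Crs.
have Hsz : (size rs <= size (span N b))%N by rewrite Srs span_size.
have Ub : uniq (span N b) by apply: span_uniq.
have [_ Heq] := uniq_min_size Ub sub Hsz.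
exists (fun i : 'I_N => b i); split.
  by move=> c Hc; apply: Ib.
move=> beta; rewrite -Heq; exact: span_mem.
Qed.
End Lin.

Lemma phi_eval_Xn (F : finFieldType) (L : closedFieldType) (iota : {rmorphism F -> L})
  (alpha : L) n (c : F) z :
  phi_eval iota alpha ('X^(n.+1) - c%:P) z = iter n.+1 (phiT F alpha) z - iota c * z.
Proof.
rewrite /phi_eval size_XnsubC // big_ord_recr /= big_ord_recl /=.
rewrite big1 => [|i _]; last first.
  rewrite coefB coefXn coefC /= /bump /= add1n eqSS ltn_eqF // subrr rmorph0 mul0r //.
rewrite !coefB !coefXn !coefC /= eqxx.
by rewrite sub0r subr0 rmorphN rmorph1 mul1r mulNr addr0 addrC.
Qed.

Theorem lemma3p2 (F : finFieldType) (L : closedFieldType)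
  (iota : {rmorphism F -> L}) (r delta : nat) (a : seq F)
  (P : {poly F}) (alpha : L) :
  (1 <= r)%N -> (2 <= delta)%N ->
  let R := (r + delta - 1)%N in
  (forall x, x \in a -> x != 0) ->
  let h := \prod_(x <- a) ('X^R - x%:P) in
  P \is monic -> irreducible_poly P ->
  h %| (P - 1) ->
  root (map_poly iota P) alpha ->
  forall x, x \in a ->
    has_Fq_dim iota (torsion iota alpha ('X^R - x%:P)) R.
Proof.
move=> hr hd R _ h _ _ hdvd Proot x xa.
have R0 : (0 < R)%N by rewrite /R subn_gt0; exact: (leq_trans hd (leq_addl r delta)).
have hne : alpha ^+ R - iota x != 0.
  apply/negP => /eqP H0.
  have d1 : ('X^R - x%:P) %| P - 1.
    apply: dvdp_trans hdvd; rewrite /h (big_rem x xa) /=.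
    exact: dvdp_mulr.
  case/dvdpP: d1 => k Hk.
  have := congr1 (fun p => (map_poly iota p).[alpha]) Hk => /=.
  rewrite rmorphB rmorph1 hornerD hornerN hornerC.
  move/rootP: Proot => ->.
  rewrite rmorphM rmorphB /= map_polyXn map_polyC /= hornerM hornerD hornerN hornerXn hornerC H0 mulr0.
  by rewrite sub0r => /eqP; rewrite oppr_eq0 oner_eq0.
set f := fun z => iter R (phiT F alpha) z - iota x * z.
have fE : forall z, phi_eval iota alpha ('X^R - x%:P) z = f z.
  by move=> z; rewrite /f -[in LHS](prednK R0) phi_eval_Xn prednK.
set Q := @Qi F L alpha R - iota x *: 'X.
have QE : forall z, Q.[z] = f z.
  by move=> z; rewrite /Q hornerD hornerN hornerZ hornerX Qi_horner.
have [sQ mQ] := Qi_size F L alpha R.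
have q1 := finNzRing_gt1 F.
have ltQ : (size (iota x *: 'X : {poly L}) < size (@Qi F L alpha R))%N.
  apply: (leq_ltn_trans (size_scale_leq _ _)); rewrite size_polyX sQ ltnS.
  apply: (leq_trans q1); rewrite -{1}(expn1 #|F|) leq_exp2l //; exact: ltnW.
have szQ : size Q = (#|F| ^ R).+1 by rewrite /Q size_polyDl ?size_polyN // sQ.
have lQ : lead_coef Q = 1.
  by rewrite /Q lead_coefDl ?size_polyN //; apply/eqP; rewrite -monicE.
have dQ : Q^`() = (alpha ^+ R - iota x)%:P.
  by rewrite /Q derivB derivZ derivX (Qi_deriv _ _ iota) alg_polyC polyCB.
have [rs Hrs] := closed_field_poly_normal Q.
rewrite lQ scale1r in Hrs.
have Urs : uniq rs.
  rewrite -separable_prod_XsubC -Hrs unlock /separable_poly dQ.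
  by rewrite -[_%:P]mulr1 mul_polyC coprimepZr // coprimep1.
have Srs : size rs = (#|F| ^ R)%N.
  by apply: succn_inj; rewrite -szQ Hrs size_prod_XsubC.
have memE : forall z, (z \in rs) = (f z == 0).
  by move=> z; rewrite -root_prod_XsubC -Hrs rootE QE.
have fD : {morph f : u v / u + v >-> u + v}.
  by move=> u v; rewrite /f /= (iterD _ _ iota) mulrDr opprD addrACA.
have f0 : f 0 = 0.
  by rewrite /f /= mulr0 subr0; have := iterZ F L iota alpha R 0 0; rewrite rmorph0 !mul0r.
have fZ : forall c z, f (iota c * z) = iota c * f z.
  by move=> c z; rewrite /f /= (iterZ _ _ iota) mulrBr mulrCA.
have Hdim : has_Fq_dim iota (fun z => z \in rs) R.
  apply: dim_lemma => // k c b Hb.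
  rewrite memE /lc (big_morph f fD f0) big1 // => i _.
  by rewrite fZ; move: (Hb i (ltn_ord i)); rewrite memE => /eqP ->; rewrite mulr0.
case: Hdim => b [Hi Hs]; exists b; split => // beta.
rewrite /torsion fE; split => [H|H]; first by apply/Hs; rewrite memE H.
by apply/eqP; rewrite -memE; apply/Hs.
Qed.
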